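(* Let $A$ be a weak bimonoid in a duoidal category $(\mathcal M,\circ,I,\bullet,J)$. For each object $M$ put $\psi_M:=((M\circ A)\bullet\mu)\cdot\zeta_{M,A,A,A}\cdot((M\bullet A)\circ\Delta):(M\bullet A)\circ A\to(M\circ A)\bullet A$. Then $\psi$ is a weak mixed distributive law between the monad $(-)\circ A$ and the comonad $(-)\bullet A$ on $\mathcal M$; that is, $\psi$ is natural and for every object $M$: (i) $((M\circ\mu)\bullet A)\cdot\psi_{M\circ A}\cdot(\psi_M\circ A)=\psi_M\cdot((M\bullet A)\circ\mu)$; (ii) $\psi_M\cdot((M\bullet A)\circ\eta)=((M\circ A)\bullet\varepsilon\bullet A)\cdot(\psi_M\bullet A)\cdot(((M\bullet A)\circ\eta)\bullet A)\cdot(M\bullet\Delta)$; (iii) $(\psi_M\bullet A)\cdot\psi_{M\bullet A}\cdot((M\bullet\Delta)\circ A)=((M\circ A)\bullet\Delta)\cdot\psi_M$; (iv) $((M\circ A)\bullet\varepsilon)\cdot\psi_M=(M\circ\mu)\cdot(((M\circ A)\bullet\varepsilon)\circ A)\cdot(\psi_M\circ A)\cdot((M\bullet A)\circ\eta\circ A)$.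
   Context: Composition of morphisms is written $g\cdot f$ ($f$ first). Associativity and unit isomorphisms of both monoidal products are suppressed. A duoidal category $(\mathcal M,\circ,I,\bullet,J)$ is a category $\mathcal M$ with two monoidal structures $(\circ,I)$ and $(\bullet,J)$, morphisms $\delta:I\to I\bullet I$, $\varpi:J\circ J\to J$, $\tau:I\to J$, and a natural transformation $\zeta_{A,B,C,D}:(A\bullet B)\circ(C\bullet D)\to(A\circ C)\bullet(B\circ D)$ such that: $(J,\varpi,\tau)$ is a monoid in $(\mathcal M,\circ,I)$; $(I,\delta,\tau)$ is a comonoid in $(\mathcal M,\bullet,J)$; for all objects, $\zeta_{A,B,C\circ E,D\circ F}\cdot((A\bullet B)\circ\zeta_{C,D,E,F})=\zeta_{A\circ C,B\circ D,E,F}\cdot(\zeta_{A,B,C,D}\circ(E\bullet F))$ and $((A\circ D)\bullet\zeta_{B,C,E,F})\cdot\zeta_{A,B\bullet C,D,E\bullet F}=(\zeta_{A,B,D,E}\bullet(C\circ F))\cdot\zeta_{A\bullet B,C,D\bullet E,F}$; and $\zeta_{I,I,A,B}\cdot(\delta\circ(A\bullet B))=\mathrm{id}=\zeta_{A,B,I,I}\cdot((A\bullet B)\circ\delta)$, $(\varpi\bullet(A\circ B))\cdot\zeta_{J,A,J,B}=\mathrm{id}=((A\circ B)\bullet\varpi)\cdot\zeta_{A,J,B,J}$. A weak bimonoid is an object $A$ with a monoid structure $(\mu,\eta)$ in $(\mathcal M,\circ,I)$ and a comonoid structure $(\Delta,\varepsilon)$ in $(\mathcal M,\bullet,J)$ satisfying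 the following nine axioms, with $e:=\Delta\cdot\eta$ and $\bar\mu:=\varepsilon\cdot\mu$: (WB) $\Delta\cdot\mu=(\mu\bullet\mu)\cdot\zeta_{A,A,A,A}\cdot(\Delta\circ\Delta)$. (RRU) $(I\bullet A\bullet\mu\bullet A)\cdot(\zeta_{I,A,I\bullet A,A}\bullet A)\cdot(((I\bullet A)\circ(I\bullet e))\bullet A)\cdot(((I\bullet A)\circ\delta)\bullet A)\cdot(I\bullet e)\cdot\delta=(I\bullet A\bullet\Delta)\cdot(I\bullet\Delta)\cdot(I\bullet\eta)\cdot\delta$. (RLU) $(I\bullet A\bullet\mu\bullet A)\cdot(\zeta_{I\bullet A,A,I,A}\bullet A)\cdot(((I\bullet e)\circ(I\bullet A))\bullet A)\cdot((\delta\circ(I\bullet A))\bullet A)\cdot(I\bullet e)\cdot\delta=(I\bullet A\bullet\Delta)\cdot(I\bullet\Delta)\cdot(I\bullet\eta)\cdot\delta$. (LRU) $(A\bullet\mu\bullet A\bullet I)\cdot(A\bullet\zeta_{A,I,A,A\bullet I})\cdot(A\bullet((A\bullet I)\circ(e\bullet I)))\cdot(A\bullet((A\bullet I)\circ\delta))\cdot(e\bullet I)\cdot\delta=(\Delta\bullet A\bullet I)\cdot(\Delta\bullet I)\cdot(\eta\bullet I)\cdot\delta$. (LLU) $(A\bullet\mu\bullet A\bullet I)\cdot(A\bullet\zeta_{A,A\bullet I,A,I})\cdot(A\bullet((e\bullet I)\circ(A\bullet I)))\cdot(A\bullet(\delta\circ(A\bullet I)))\cdot(e\bullet I)\cdot\delta=(\Delta\bullet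 A\bullet I)\cdot(\Delta\bullet I)\cdot(\eta\bullet I)\cdot\delta$. (LRC) $\varpi\cdot(J\circ\bar\mu)\cdot((\varpi\bullet(J\circ A))\circ A)\cdot(((J\circ\bar\mu)\bullet(J\circ A))\circ A)\cdot(\zeta_{J\circ A,J,A,A}\circ A)\cdot(J\circ A\circ\Delta\circ A)=\varpi\cdot(J\circ\varepsilon)\cdot(J\circ\mu)\cdot(J\circ A\circ\mu)$. (LLC) $\varpi\cdot(J\circ\bar\mu)\cdot(((J\circ A)\bullet\varpi)\circ A)\cdot(((J\circ A)\bullet(J\circ\bar\mu))\circ A)\cdot(\zeta_{J,J\circ A,A,A}\circ A)\cdot(J\circ A\circ\Delta\circ A)=\varpi\cdot(J\circ\varepsilon)\cdot(J\circ\mu)\cdot(J\circ A\circ\mu)$. (RRC) $\varpi\cdot(\bar\mu\circ J)\cdot(A\circ(\varpi\bullet(A\circ J)))\cdot(A\circ((\bar\mu\circ J)\bullet(A\circ J)))\cdot(A\circ\zeta_{A,A,A\circ J,J})\cdot(A\circ\Delta\circ A\circ J)=\varpi\cdot(\varepsilon\circ J)\cdot(\mu\circ J)\cdot(\mu\circ A\circ J)$. (RLC) $\varpi\cdot(\bar\mu\circ J)\cdot(A\circ((A\circ J)\bullet\varpi))\cdot(A\circ((A\circ J)\bullet(\bar\mu\circ J)))\cdot(A\circ\zeta_{A,A,J,A\circ J})\cdot(A\circ\Delta\circ A\circ J)=\varpi\cdot(\varepsilon\circ J)\cdot(\mu\circ J)\cdot(\mu\circ A\circ J)$. The monad $(-)\circ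 A$ has multiplication $M\circ\mu$ and unit $M\circ\eta$; the comonad $(-)\bullet A$ has comultiplication $M\bullet\Delta$ and counit $M\bullet\varepsilon$. *)

(* Defs.v *)
(* Coherence isomorphisms (associators/unitors),
   which the paper suppresses, are inserted explicitly. *)
Set Implicit Arguments.
Unset Strict Implicit.

(* ---------- Categories (g · f = "f first, then g") ---------- *)
Record Cat : Type := {
  ob :> Type;
  hom : ob -> ob -> Type;
  cid : forall a, hom a a;
  comp : forall a b c, hom b c -> hom a b -> hom a c;
  comp_idl : forall a b (f : hom a b), comp (cid b) f = f;
  comp_idr : forall a b (f : hom a b), comp f (cid a) = f;
  comp_assoc : forall a b c d (h : hom c d) (g : hom b c) (f : hom a b),
      comp h (comp g f) = comp (comp h g) f }.
Arguments hom {_} _ _.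
Arguments cid {_} _.
Arguments comp {_ _ _ _} _ _.
Notation "g · f" := (comp g f) (at level 50, left associativity).

Record MonOps (C : Cat) := {
  tens : C -> C -> C;
  tensm : forall a b c d : C, hom a b -> hom c d -> hom (tens a c) (tens b d);
  munit : C;
  asc : forall a b c : C, hom (tens (tens a b) c) (tens a (tens b c));
  asci : forall a b c : C, hom (tens a (tens b c)) (tens (tens a b) c);
  lu : forall a : C, hom (tens munit a) a;
  lui : forall a : C, hom a (tens munit a);
  ru : forall a : C, hom (tens a munit) a;
  rui : forall a : C, hom a (tens a munit) }.
Arguments tens {C} _ _ _.
Arguments tensm {C} _ {a b c d} _ _.
Arguments munit {C} _.
Arguments asc {C} _ _ _ _.
Arguments asci {C} _ _ _ _.
Arguments lu {C} _ _.
Arguments lui {C} _ _.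
Arguments ru {C} _ _.
Arguments rui {C} _ _.

Record MonLaws (C : Cat) (M : MonOps C) : Prop := {
  tensm_id : forall a b : C, tensm M (cid a) (cid b) = cid (tens M a b);
  tensm_comp : forall (a1 a2 a3 b1 b2 b3 : C) (f1 : hom a1 a2) (f2 : hom a2 a3)
      (g1 : hom b1 b2) (g2 : hom b2 b3),
      tensm M (f2 · f1) (g2 · g1) = tensm M f2 g2 · tensm M f1 g1;
  asc_iso1 : forall a b c : C, asci M a b c · asc M a b c = cid _;
  asc_iso2 : forall a b c : C, asc M a b c · asci M a b c = cid _;
  asc_nat : forall (a a' b b' c c' : C) (f : hom a a') (g : hom b b') (h : hom c c'),
      asc M a' b' c' · tensm M (tensm M f g) h = tensm M f (tensm M g h) · asc M a b c;
  lu_iso1 : forall a : C, lui M a · lu M a = cid _;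
  lu_iso2 : forall a : C, lu M a · lui M a = cid _;
  lu_nat : forall (a b : C) (f : hom a b), f · lu M a = lu M b · tensm M (cid (munit M)) f;
  ru_iso1 : forall a : C, rui M a · ru M a = cid _;
  ru_iso2 : forall a : C, ru M a · rui M a = cid _;
  ru_nat : forall (a b : C) (f : hom a b), f · ru M a = ru M b · tensm M f (cid (munit M));
  pentagon : forall a b c d : C,
      asc M a b (tens M c d) · asc M (tens M a b) c d
      = tensm M (cid a) (asc M b c d) · asc M a (tens M b c) d · tensm M (asc M a b c) (cid d);
  triangle : forall a b : C,
      tensm M (cid a) (lu M b) · asc M a (munit M) b = tensm M (ru M a) (cid b) }.

Record Monoidal (C : Cat) := { mops :> MonOps C; mlaws : MonLaws mops }.

Record DuoOps (C : Cat) := {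
  dO : Monoidal C;
  dB : Monoidal C;
  dDelta : hom (munit dO) (tens dB (munit dO) (munit dO));
  dVarpi : hom (tens dO (munit dB) (munit dB)) (munit dB);
  dTau : hom (munit dO) (munit dB);
  dZeta : forall a b c d : C,
      hom (tens dO (tens dB a b) (tens dB c d)) (tens dB (tens dO a c) (tens dO b d)) }.
Arguments dO {C} _.
Arguments dB {C} _.
Arguments dDelta {C} _.
Arguments dVarpi {C} _.
Arguments dTau {C} _.
Arguments dZeta {C} _ _ _ _ _.

Section DuoidalLaws.
Variables (C : Cat) (D : DuoOps C).
Local Notation "a ⊙ b" := (tens (dO D) a b) (at level 40, left associativity).
Local Notation "a ⊛ b" := (tens (dB D) a b) (at level 40, left associativity).
Local Notation "f ⊙' g" := (tensm (dO D) f g) (at level 40, left associativity).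
Local Notation "f ⊛' g" := (tensm (dB D) f g) (at level 40, left associativity).
Local Notation I := (munit (dO D)).
Local Notation J := (munit (dB D)).
Local Notation δ := (dDelta D).
Local Notation ϖ := (dVarpi D).
Local Notation τ := (dTau D).
Local Notation ζ := (dZeta D).

Record DuoLaws : Prop := {
  zeta_nat : forall (a a' b b' c c' d d' : C) (f : hom a a') (g : hom b b')
      (h : hom c c') (k : hom d d'),
      ζ a' b' c' d' · ((f ⊛' g) ⊙' (h ⊛' k)) = ((f ⊙' h) ⊛' (g ⊙' k)) · ζ a b c d;
  varpi_assoc : ϖ · (ϖ ⊙' cid J) = ϖ · (cid J ⊙' ϖ) · asc (dO D) J J J;
  varpi_lunit : ϖ · (τ ⊙' cid J) = lu (dO D) J;
  varpi_runit : ϖ · (cid J ⊙' τ) = ru (dO D) J;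
  delta_coassoc : (δ ⊛' cid I) · δ = asci (dB D) I I I · (cid I ⊛' δ) · δ;
  delta_lcounit : (τ ⊛' cid I) · δ = lui (dB D) I;
  delta_rcounit : (cid I ⊛' τ) · δ = rui (dB D) I;
  zeta_assoc_o : forall a b c d e f : C,
      (asc (dO D) a c e ⊛' asc (dO D) b d f) · ζ (a ⊙ c) (b ⊙ d) e f
        · (ζ a b c d ⊙' cid (e ⊛ f))
      = ζ a b (c ⊙ e) (d ⊙ f) · (cid (a ⊛ b) ⊙' ζ c d e f)
        · asc (dO D) (a ⊛ b) (c ⊛ d) (e ⊛ f);
  zeta_assoc_b : forall a b c d e f : C,
      asc (dB D) (a ⊙ d) (b ⊙ e) (c ⊙ f) · (ζ a b d e ⊛' cid (c ⊙ f))
        · ζ (a ⊛ b) c (d ⊛ e) f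
      = (cid (a ⊙ d) ⊛' ζ b c e f) · ζ a (b ⊛ c) d (e ⊛ f)
        · (asc (dB D) a b c ⊙' asc (dB D) d e f);
  zeta_delta_l : forall a b : C,
      (lu (dO D) a ⊛' lu (dO D) b) · ζ I I a b · (δ ⊙' cid (a ⊛ b)) = lu (dO D) (a ⊛ b);
  zeta_delta_r : forall a b : C,
      (ru (dO D) a ⊛' ru (dO D) b) · ζ a b I I · (cid (a ⊛ b) ⊙' δ) = ru (dO D) (a ⊛ b);
  zeta_varpi_l : forall a b : C,
      lu (dB D) (a ⊙ b) · (ϖ ⊛' cid (a ⊙ b)) · ζ J a J b = lu (dB D) a ⊙' lu (dB D) b;
  zeta_varpi_r : forall a b : C,
      ru (dB D) (a ⊙ b) · (cid (a ⊙ b) ⊛' ϖ) · ζ a J b J = ru (dB D) a ⊙' ru (dB D) b }.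
End DuoidalLaws.

Record Duoidal (C : Cat) := { dops :> DuoOps C; dlaws : DuoLaws dops }.

Section WeakBimonoid.
Variables (C : Cat) (D : Duoidal C).
Local Notation "a ⊙ b" := (tens (dO D) a b) (at level 40, left associativity).
Local Notation "a ⊛ b" := (tens (dB D) a b) (at level 40, left associativity).
Local Notation "f ⊙' g" := (tensm (dO D) f g) (at level 40, left associativity).
Local Notation "f ⊛' g" := (tensm (dB D) f g) (at level 40, left associativity).
Local Notation I := (munit (dO D)).
Local Notation J := (munit (dB D)).
Local Notation δ := (dDelta D).
Local Notation ϖ := (dVarpi D).
Local Notation ζ := (dZeta D).
Local Notation αo := (asc (dO D)).
Local Notation αo' := (asci (dO D)).
Local Notation αb := (asc (dB D)).
Local Notation αb' := (asci (dB D)).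
Local Notation λo := (lu (dO D)).
Local Notation λo' := (lui (dO D)).
Local Notation ρo := (ru (dO D)).
Local Notation ρo' := (rui (dO D)).
Local Notation λb := (lu (dB D)).
Local Notation λb' := (lui (dB D)).
Local Notation ρb := (ru (dB D)).
Local Notation ρb' := (rui (dB D)).

Record WeakBimonoid (A : C) := {
  wμ : hom (A ⊙ A) A;
  wη : hom I A;
  wΔ : hom A (A ⊛ A);
  wε : hom A J;
  mu_assoc : wμ · (wμ ⊙' cid A) = wμ · (cid A ⊙' wμ) · αo A A A;
  mu_lunit : wμ · (wη ⊙' cid A) = λo A;
  mu_runit : wμ · (cid A ⊙' wη) = ρo A;
  Delta_coassoc : (wΔ ⊛' cid A) · wΔ = αb' A A A · (cid A ⊛' wΔ) · wΔ;
  Delta_lcounit : (wε ⊛' cid A) · wΔ = λb' A;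
  Delta_rcounit : (cid A ⊛' wε) · wΔ = ρb' A;
  ax_WB : wΔ · wμ = (wμ ⊛' wμ) · ζ A A A A · (wΔ ⊙' wΔ);
  ax_RRU :
    (((cid (I ⊛ A) ⊛' wμ) · (λo (I ⊛ A) ⊛' cid (A ⊙ A))) ⊛' cid A)
    · (ζ I A (I ⊛ A) A ⊛' cid A)
    · ((cid (I ⊛ A) ⊙' αb' I A A) ⊛' cid A)
    · ((cid (I ⊛ A) ⊙' (cid I ⊛' (wΔ · wη))) ⊛' cid A)
    · ((cid (I ⊛ A) ⊙' δ) ⊛' cid A)
    · (ρo' (I ⊛ A) ⊛' cid A) · αb' I A A
    · (cid I ⊛' (wΔ · wη)) · δ
    = αb' (I ⊛ A) A A · αb' I A (A ⊛ A)
      · (cid I ⊛' (cid A ⊛' wΔ)) · (cid I ⊛' wΔ) · (cid I ⊛' wη) · δ;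
  ax_RLU :
    (((cid (I ⊛ A) ⊛' wμ) · (ρo (I ⊛ A) ⊛' cid (A ⊙ A))) ⊛' cid A)
    · (ζ (I ⊛ A) A I A ⊛' cid A)
    · ((αb' I A A ⊙' cid (I ⊛ A)) ⊛' cid A)
    · (((cid I ⊛' (wΔ · wη)) ⊙' cid (I ⊛ A)) ⊛' cid A)
    · ((δ ⊙' cid (I ⊛ A)) ⊛' cid A)
    · (λo' (I ⊛ A) ⊛' cid A) · αb' I A A
    · (cid I ⊛' (wΔ · wη)) · δ
    = αb' (I ⊛ A) A A · αb' I A (A ⊛ A)
      · (cid I ⊛' (cid A ⊛' wΔ)) · (cid I ⊛' wΔ) · (cid I ⊛' wη) · δ;
  ax_LRU :
    (cid A ⊛' ((wμ ⊛' cid (A ⊛ I)) · (cid (A ⊙ A) ⊛' λo (A ⊛ I))))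
    · (cid A ⊛' ζ A I A (A ⊛ I))
    · (cid A ⊛' (cid (A ⊛ I) ⊙' αb A A I))
    · (cid A ⊛' (cid (A ⊛ I) ⊙' ((wΔ · wη) ⊛' cid I)))
    · (cid A ⊛' (cid (A ⊛ I) ⊙' δ))
    · (cid A ⊛' ρo' (A ⊛ I)) · αb A A I
    · ((wΔ · wη) ⊛' cid I) · δ
    = αb A A (A ⊛ I) · (wΔ ⊛' cid (A ⊛ I)) · αb A A I
      · (wΔ ⊛' cid I) · (wη ⊛' cid I) · δ;
  ax_LLU :
    (cid A ⊛' ((wμ ⊛' cid (A ⊛ I)) · (cid (A ⊙ A) ⊛' ρo (A ⊛ I))))
    · (cid A ⊛' ζ A (A ⊛ I) A I)
    · (cid A ⊛' (αb A A I ⊙' cid (A ⊛ I)))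
    · (cid A ⊛' (((wΔ · wη) ⊛' cid I) ⊙' cid (A ⊛ I)))
    · (cid A ⊛' (δ ⊙' cid (A ⊛ I)))
    · (cid A ⊛' λo' (A ⊛ I)) · αb A A I
    · ((wΔ · wη) ⊛' cid I) · δ
    = αb A A (A ⊛ I) · (wΔ ⊛' cid (A ⊛ I)) · αb A A I
      · (wΔ ⊛' cid I) · (wη ⊛' cid I) · δ;
  ax_LRC :
    ϖ · (cid J ⊙' (wε · wμ)) · αo J A A
    · (λb (J ⊙ A) ⊙' cid A)
    · ((ϖ ⊛' cid (J ⊙ A)) ⊙' cid A)
    · (((cid J ⊙' (wε · wμ)) ⊛' cid (J ⊙ A)) ⊙' cid A)
    · ((αo J A A ⊛' cid (J ⊙ A)) ⊙' cid A)
    · (ζ (J ⊙ A) J A A ⊙' cid A)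
    · ((ρb' (J ⊙ A) ⊙' cid (A ⊛ A)) ⊙' cid A)
    · ((cid (J ⊙ A) ⊙' wΔ) ⊙' cid A)
    = ϖ · (cid J ⊙' wε) · (cid J ⊙' wμ) · αo J A A
      · (cid (J ⊙ A) ⊙' wμ) · αo (J ⊙ A) A A;
  ax_LLC :
    ϖ · (cid J ⊙' (wε · wμ)) · αo J A A
    · (ρb (J ⊙ A) ⊙' cid A)
    · ((cid (J ⊙ A) ⊛' ϖ) ⊙' cid A)
    · ((cid (J ⊙ A) ⊛' (cid J ⊙' (wε · wμ))) ⊙' cid A)
    · ((cid (J ⊙ A) ⊛' αo J A A) ⊙' cid A)
    · (ζ J (J ⊙ A) A A ⊙' cid A)
    · ((λb' (J ⊙ A) ⊙' cid (A ⊛ A)) ⊙' cid A)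
    · ((cid (J ⊙ A) ⊙' wΔ) ⊙' cid A)
    = ϖ · (cid J ⊙' wε) · (cid J ⊙' wμ) · αo J A A
      · (cid (J ⊙ A) ⊙' wμ) · αo (J ⊙ A) A A;
  ax_RRC :
    ϖ · ((wε · wμ) ⊙' cid J) · αo' A A J
    · (cid A ⊙' λb (A ⊙ J))
    · (cid A ⊙' (ϖ ⊛' cid (A ⊙ J)))
    · (cid A ⊙' (((wε · wμ) ⊙' cid J) ⊛' cid (A ⊙ J)))
    · (cid A ⊙' (αo' A A J ⊛' cid (A ⊙ J)))
    · (cid A ⊙' ζ A A (A ⊙ J) J)
    · (cid A ⊙' (cid (A ⊛ A) ⊙' ρb' (A ⊙ J)))
    · (cid A ⊙' (wΔ ⊙' cid (A ⊙ J)))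
    = ϖ · (wε ⊙' cid J) · (wμ ⊙' cid J) · αo' A A J
      · (wμ ⊙' cid (A ⊙ J)) · αo' A A (A ⊙ J);
  ax_RLC :
    ϖ · ((wε · wμ) ⊙' cid J) · αo' A A J
    · (cid A ⊙' ρb (A ⊙ J))
    · (cid A ⊙' (cid (A ⊙ J) ⊛' ϖ))
    · (cid A ⊙' (cid (A ⊙ J) ⊛' ((wε · wμ) ⊙' cid J)))
    · (cid A ⊙' (cid (A ⊙ J) ⊛' αo' A A J))
    · (cid A ⊙' ζ A A J (A ⊙ J))
    · (cid A ⊙' (cid (A ⊛ A) ⊙' λb' (A ⊙ J)))
    · (cid A ⊙' (wΔ ⊙' cid (A ⊙ J)))
    = ϖ · (wε ⊙' cid J) · (wμ ⊙' cid J) · αo' A A J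
      · (wμ ⊙' cid (A ⊙ J)) · αo' A A (A ⊙ J) }.

Definition psi (A : C) (W : WeakBimonoid A) (M : C)
  : hom ((M ⊛ A) ⊙ A) ((M ⊙ A) ⊛ A) :=
  (cid (M ⊙ A) ⊛' wμ W) · ζ M A A A · (cid (M ⊛ A) ⊙' wΔ W).

Definition weak_mixed_distributive_law (A : C) (mu : hom (A ⊙ A) A) (eta : hom I A)
    (Delta : hom A (A ⊛ A)) (eps : hom A J)
    (ps : forall M : C, hom ((M ⊛ A) ⊙ A) ((M ⊙ A) ⊛ A)) : Prop :=
  (forall (M N : C) (f : hom M N),
      ((f ⊙' cid A) ⊛' cid A) · ps M = ps N · ((f ⊛' cid A) ⊙' cid A)) /\
  (forall M : C,
      ((cid M ⊙' mu) ⊛' cid A) · (αo M A A ⊛' cid A) · ps (M ⊙ A) · (ps M ⊙' cid A)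
      = ps M · (cid (M ⊛ A) ⊙' mu) · αo (M ⊛ A) A A) /\
  (forall M : C,
      ps M · (cid (M ⊛ A) ⊙' eta) · ρo' (M ⊛ A)
      = (ρb (M ⊙ A) ⊛' cid A) · ((cid (M ⊙ A) ⊛' eps) ⊛' cid A) · (ps M ⊛' cid A)
        · ((cid (M ⊛ A) ⊙' eta) ⊛' cid A) · (ρo' (M ⊛ A) ⊛' cid A)
        · αb' M A A · (cid M ⊛' Delta)) /\
  (forall M : C,
      (ps M ⊛' cid A) · ps (M ⊛ A) · (αb' M A A ⊙' cid A) · ((cid M ⊛' Delta) ⊙' cid A)
      = αb' (M ⊙ A) A A · (cid (M ⊙ A) ⊛' Delta) · ps M) /\
  (forall M : C,
      ρb (M ⊙ A) · (cid (M ⊙ A) ⊛' eps) · ps M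
      = (cid M ⊙' mu) · αo M A A · (ρb (M ⊙ A) ⊙' cid A)
        · ((cid (M ⊙ A) ⊛' eps) ⊙' cid A) · (ps M ⊙' cid A)
        · ((cid (M ⊛ A) ⊙' eta) ⊙' cid A) · (ρo' (M ⊛ A) ⊙' cid A)).

End WeakBimonoid.

(* Main.v *)
Require Import Defs.
From Stdlib Require Import ssreflect.

Lemma kcA (C : Cat) {a b c d : C} (h : hom c d) (g : hom b c) (f : hom a b) : h · (g · f) = h · g · f.
Proof. apply comp_assoc. Qed.

Ltac lnest r L :=
  lazymatch L with
  | @comp _ _ _ _ ?P ?x => let P' := lnest r P in constr:(comp P' x)
  | _ => constr:(comp r L)
  end.

Ltac crw H :=
  lazymatch type of H with
  | @eq (@hom ?CC ?a ?b) ?L ?R =>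
    first [ rewrite H
          | let H' := fresh in
            assert (H' : forall (c : ob CC) (r : hom b c), ltac:(let t := lnest r L in exact (t = comp r R)))
              by (intros; rewrite -H; rewrite !kcA; reflexivity);
            rewrite H'; clear H' ]; rewrite ?kcA
  end.

Section K.
Variables (C : Cat) (M : MonOps C) (L : MonLaws M).
Local Notation T := (tensm M).
Local Notation "a ⊗ b" := (tens M a b) (at level 40, left associativity).
Local Notation U := (munit M).

Lemma Tr {a b c x : C} (f : hom b c) (g : hom a b) : T (cid x) (f · g) = T (cid x) f · T (cid x) g.
Proof. by rewrite -(tensm_comp L) comp_idl. Qed.
Lemma Tl {a b c x : C} (f : hom b c) (g : hom a b) : T (f · g) (cid x) = T f (cid x) · T g (cid x).
Proof. by rewrite -(tensm_comp L) comp_idl. Qed.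

Lemma lu_faith {a b : C} (f g : hom a b) : T (cid U) f = T (cid U) g -> f = g.
Proof.
  move=> H.
  have Ef : f = lu M b · T (cid U) f · lui M a.
  { rewrite -(lu_nat L) -kcA (lu_iso2 L) comp_idr. done. }
  have Eg : g = lu M b · T (cid U) g · lui M a.
  { rewrite -(lu_nat L) -kcA (lu_iso2 L) comp_idr. done. }
  by rewrite Ef Eg H.
Qed.

Lemma ru_faith {a b : C} (f g : hom a b) : T f (cid U) = T g (cid U) -> f = g.
Proof.
  move=> H.
  have Ef : f = ru M b · T f (cid U) · rui M a.
  { rewrite -(ru_nat L) -kcA (ru_iso2 L) comp_idr. done. }
  have Eg : g = ru M b · T g (cid U) · rui M a.
  { rewrite -(ru_nat L) -kcA (ru_iso2 L) comp_idr. done. }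
  by rewrite Ef Eg H.
Qed.

Lemma cancel_r {a b c : C} (f g : hom b c) (h : hom a b) (h' : hom b a) :
  h · h' = cid b -> f · h = g · h -> f = g.
Proof. move=> Hi E. by rewrite -[f]comp_idr -[g]comp_idr -Hi !kcA E. Qed.

Lemma cancel_l {a b c : C} (f g : hom a b) (h : hom b c) (h' : hom c b) :
  h' · h = cid b -> h · f = h · g -> f = g.
Proof. move=> Hi E. by rewrite -[f]comp_idl -[g]comp_idl -Hi -!kcA E. Qed.

Lemma kelly_l (a b : C) : lu M (a ⊗ b) · asc M U a b = T (lu M a) (cid b).
Proof.
  apply lu_faith.
  apply (cancel_r _ _ (asc M U (U ⊗ a) b · T (asc M U U a) (cid b))
                  (T (asci M U U a) (cid b) · asci M U (U ⊗ a) b)).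
  { rewrite -!kcA (kcA C (T _ _) (T _ _)) -(tensm_comp L) (asc_iso2 L) comp_idl (tensm_id L) comp_idl (asc_iso2 L). done. }
  have P := pentagon L U U a b.
  have T1 := triangle L U (a ⊗ b).
  have T2 := triangle L U a.
  have N1 := asc_nat L (ru M U) (cid a) (cid b).
  have N2 := asc_nat L (cid U) (lu M a) (cid b).
  rewrite (tensm_id L) in N1.
  rewrite Tr ?kcA. symmetry in P. crw P. crw T1. symmetry in N1. crw N1.
  rewrite -T2 Tl ?kcA. crw N2. done.
Qed.

Lemma kelly_r (a b : C) : T (cid a) (ru M b) · asc M a b U = ru M (a ⊗ b).
Proof.
  apply ru_faith.
  apply (cancel_l _ _ (asc M a b U) (asci M a b U)).
  { apply (asc_iso1 L). }
  have P := pentagon L a b U U.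
  have T1 := triangle L (a ⊗ b) U.
  have T2 := triangle L b U.
  have N1 := asc_nat L (cid a) (cid b) (lu M U).
  have N2 := asc_nat L (cid a) (ru M b) (cid U).
  rewrite (tensm_id L) in N1.
  rewrite -T1 Tl ?kcA. rewrite N2. rewrite -T2 Tr ?kcA. symmetry in P. crw P.
  symmetry in N1. crw N1. done.
Qed.
End K.


Section S.
Variables (C : Cat) (O B : MonOps C) (LO : MonLaws O) (LB : MonLaws B).
Local Notation "a ⊙ b" := (tens O a b) (at level 40, left associativity).
Local Notation "a ⊛ b" := (tens B a b) (at level 40, left associativity).
Local Notation "f ⊙' g" := (tensm O f g) (at level 40, left associativity).
Local Notation "f ⊛' g" := (tensm B f g) (at level 40, left associativity).
Local Notation I := (munit O).
Local Notation J := (munit B).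
Local Notation αo := (asc O).
Local Notation αo' := (asci O).
Local Notation αb := (asc B).
Local Notation αb' := (asci B).
Local Notation "1" := (cid _).
Local Notation λo := (lu O).
Local Notation λo' := (lui O).
Local Notation ρo := (ru O).
Local Notation ρo' := (rui O).
Local Notation λb := (lu B).
Local Notation λb' := (lui B).
Local Notation ρb := (ru B).
Local Notation ρb' := (rui B).
Variable δ : hom I (I ⊛ I).
Variable τ : hom I J.
Variable ζ : forall a b c d : C, hom ((a ⊛ b) ⊙ (c ⊛ d)) ((a ⊙ c) ⊛ (b ⊙ d)).
Hypothesis Hzn : forall (a a' b b' c c' d d' : C) (f : hom a a') (g : hom b b') (h : hom c c') (k : hom d d'),
  ζ a' b' c' d' · ((f ⊛' g) ⊙' (h ⊛' k)) = ((f ⊙' h) ⊛' (g ⊙' k)) · ζ a b c d.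
Hypothesis Hdlc : (τ ⊛' cid I) · δ = λb' I.
Hypothesis Hzao : forall a b c d e f : C,
  (αo a c e ⊛' αo b d f) · ζ (a ⊙ c) (b ⊙ d) e f · (ζ a b c d ⊙' cid (e ⊛ f))
  = ζ a b (c ⊙ e) (d ⊙ f) · (cid (a ⊛ b) ⊙' ζ c d e f) · αo (a ⊛ b) (c ⊛ d) (e ⊛ f).
Hypothesis Hzab : forall a b c d e f : C,
  αb (a ⊙ d) (b ⊙ e) (c ⊙ f) · (ζ a b d e ⊛' cid (c ⊙ f)) · ζ (a ⊛ b) c (d ⊛ e) f
  = (cid (a ⊙ d) ⊛' ζ b c e f) · ζ a (b ⊛ c) d (e ⊛ f) · (αb a b c ⊙' αb d e f).
Hypothesis Hzdr : forall a b : C,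
  (ρo a ⊛' ρo b) · ζ a b I I · (cid (a ⊛ b) ⊙' δ) = ρo (a ⊛ b).
Variables (A : C) (μ : hom (A ⊙ A) A) (η : hom I A) (Δ : hom A (A ⊛ A)) (ε : hom A J).
Hypothesis Hmua : μ · (μ ⊙' cid A) = μ · (cid A ⊙' μ) · αo A A A.
Hypothesis Hmur : μ · (cid A ⊙' η) = ρo A.
Hypothesis HDc : (Δ ⊛' cid A) · Δ = αb' A A A · (cid A ⊛' Δ) · Δ.
Hypothesis HDlc : (ε ⊛' cid A) · Δ = λb' A.
Hypothesis HWB : Δ · μ = (μ ⊛' μ) · ζ A A A A · (Δ ⊙' Δ).
Hypothesis HRRU :
    (((cid (I ⊛ A) ⊛' μ) · (λo (I ⊛ A) ⊛' cid (A ⊙ A))) ⊛' cid A)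
    · (ζ I A (I ⊛ A) A ⊛' cid A)
    · ((cid (I ⊛ A) ⊙' αb' I A A) ⊛' cid A)
    · ((cid (I ⊛ A) ⊙' (cid I ⊛' (Δ · η))) ⊛' cid A)
    · ((cid (I ⊛ A) ⊙' δ) ⊛' cid A)
    · (ρo' (I ⊛ A) ⊛' cid A) · αb' I A A
    · (cid I ⊛' (Δ · η)) · δ
    = αb' (I ⊛ A) A A · αb' I A (A ⊛ A)
      · (cid I ⊛' (cid A ⊛' Δ)) · (cid I ⊛' Δ) · (cid I ⊛' η) · δ.

Definition gpsi (M : C) : hom ((M ⊛ A) ⊙ A) ((M ⊙ A) ⊛ A) :=
  (cid (M ⊙ A) ⊛' μ) · ζ M A A A · (cid (M ⊛ A) ⊙' Δ).

Lemma cA {a b c d : C} (h : hom c d) (g : hom b c) (f : hom a b) : h · (g · f) = h · g · f.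
Proof. apply comp_assoc. Qed.
Lemma c1l {a b : C} (f : hom a b) : cid b · f = f. Proof. apply comp_idl. Qed.
Lemma c1r {a b : C} (f : hom a b) : f · cid a = f. Proof. apply comp_idr. Qed.

Ltac nrm := rewrite ?cA ?c1l ?c1r.


Lemma oC {a1 a2 a3 b1 b2 b3 : C} (f1 : hom a1 a2) (f2 : hom a2 a3) (g1 : hom b1 b2) (g2 : hom b2 b3) :
  (f2 · f1) ⊙' (g2 · g1) = (f2 ⊙' g2) · (f1 ⊙' g1).
Proof. apply (tensm_comp LO). Qed.
Lemma o1 {a b : C} : cid a ⊙' cid b = cid (a ⊙ b).
Proof. apply (tensm_id LO). Qed.
Lemma oCl {a b c e : C} (f : hom b c) (g : hom a b) : (f · g) ⊙' cid e = (f ⊙' 1) · (g ⊙' 1).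
Proof. by rewrite -oC c1l. Qed.
Lemma oCr {a b c e : C} (f : hom b c) (g : hom a b) : cid e ⊙' (f · g) = (1 ⊙' f) · (1 ⊙' g).
Proof. by rewrite -oC c1l. Qed.
Lemma oS {a b c d : C} (f : hom a b) (g : hom c d) : f ⊙' g = (f ⊙' 1) · (1 ⊙' g).
Proof. by rewrite -oC c1l c1r. Qed.
Lemma oS' {a b c d : C} (f : hom a b) (g : hom c d) : f ⊙' g = (1 ⊙' g) · (f ⊙' 1).
Proof. by rewrite -oC c1l c1r. Qed.
Lemma oX {a b c d : C} (f : hom a b) (g : hom c d) : (f ⊙' 1) · (1 ⊙' g) = (1 ⊙' g) · (f ⊙' 1).
Proof. by rewrite -oS -oS'. Qed.

Lemma bC {a1 a2 a3 b1 b2 b3 : C} (f1 : hom a1 a2) (f2 : hom a2 a3) (g1 : hom b1 b2) (g2 : hom b2 b3) :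
  (f2 · f1) ⊛' (g2 · g1) = (f2 ⊛' g2) · (f1 ⊛' g1).
Proof. apply (tensm_comp LB). Qed.
Lemma b1 {a b : C} : cid a ⊛' cid b = cid (a ⊛ b).
Proof. apply (tensm_id LB). Qed.
Lemma bCl {a b c e : C} (f : hom b c) (g : hom a b) : (f · g) ⊛' cid e = (f ⊛' 1) · (g ⊛' 1).
Proof. by rewrite -bC c1l. Qed.
Lemma bCr {a b c e : C} (f : hom b c) (g : hom a b) : cid e ⊛' (f · g) = (1 ⊛' f) · (1 ⊛' g).
Proof. by rewrite -bC c1l. Qed.
Lemma bS {a b c d : C} (f : hom a b) (g : hom c d) : f ⊛' g = (f ⊛' 1) · (1 ⊛' g).
Proof. by rewrite -bC c1l c1r. Qed.
Lemma bS' {a b c d : C} (f : hom a b) (g : hom c d) : f ⊛' g = (1 ⊛' g) · (f ⊛' 1).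
Proof. by rewrite -bC c1l c1r. Qed.
Lemma bX {a b c d : C} (f : hom a b) (g : hom c d) : (f ⊛' 1) · (1 ⊛' g) = (1 ⊛' g) · (f ⊛' 1).
Proof. by rewrite -bS -bS'. Qed.

Lemma zn {a a' b b' c c' d d' : C} (f : hom a a') (g : hom b b') (h : hom c c') (k : hom d d') :
  ζ a' b' c' d' · ((f ⊛' g) ⊙' (h ⊛' k)) = ((f ⊙' h) ⊛' (g ⊙' k)) · ζ a b c d.
Proof. apply Hzn. Qed.

Lemma ao_nat {a a' b b' c c' : C} (f : hom a a') (g : hom b b') (h : hom c c') :
  αo a' b' c' · ((f ⊙' g) ⊙' h) = (f ⊙' (g ⊙' h)) · αo a b c.
Proof. apply (asc_nat LO). Qed.
Lemma ao_i1 {a b c : C} : αo' a b c · αo a b c = cid _. Proof. apply (asc_iso1 LO). Qed.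
Lemma ao_i2 {a b c : C} : αo a b c · αo' a b c = cid _. Proof. apply (asc_iso2 LO). Qed.
Lemma ao'_nat {a a' b b' c c' : C} (f : hom a a') (g : hom b b') (h : hom c c') :
  αo' a' b' c' · (f ⊙' (g ⊙' h)) = ((f ⊙' g) ⊙' h) · αo' a b c.
Proof.
  rewrite -[LHS]c1r -ao_i2 !cA. rewrite -[αo' _ _ _ · _ · _]cA -ao_nat !cA ao_i1 c1l. done.
Qed.
Lemma ab_nat {a a' b b' c c' : C} (f : hom a a') (g : hom b b') (h : hom c c') :
  αb a' b' c' · ((f ⊛' g) ⊛' h) = (f ⊛' (g ⊛' h)) · αb a b c.
Proof. apply (asc_nat LB). Qed.
Lemma ab_i1 {a b c : C} : αb' a b c · αb a b c = cid _. Proof. apply (asc_iso1 LB). Qed.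
Lemma ab_i2 {a b c : C} : αb a b c · αb' a b c = cid _. Proof. apply (asc_iso2 LB). Qed.
Lemma ab'_nat {a a' b b' c c' : C} (f : hom a a') (g : hom b b') (h : hom c c') :
  αb' a' b' c' · (f ⊛' (g ⊛' h)) = ((f ⊛' g) ⊛' h) · αb' a b c.
Proof.
  rewrite -[LHS]c1r -ab_i2 !cA. rewrite -[αb' _ _ _ · _ · _]cA -ab_nat !cA ab_i1 c1l. done.
Qed.

Lemma lo_nat {a b : C} (f : hom a b) : f · λo a = λo b · (cid I ⊙' f). Proof. apply (lu_nat LO). Qed.
Lemma ro_nat {a b : C} (f : hom a b) : f · ρo a = ρo b · (f ⊙' cid I). Proof. apply (ru_nat LO). Qed.
Lemma lb_nat {a b : C} (f : hom a b) : f · λb a = λb b · (cid J ⊛' f). Proof. apply (lu_nat LB). Qed.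
Lemma rb_nat {a b : C} (f : hom a b) : f · ρb a = ρb b · (f ⊛' cid J). Proof. apply (ru_nat LB). Qed.
Lemma lo_i1 {a : C} : λo' a · λo a = cid _. Proof. apply (lu_iso1 LO). Qed.
Lemma lo_i2 {a : C} : λo a · λo' a = cid _. Proof. apply (lu_iso2 LO). Qed.
Lemma ro_i1 {a : C} : ρo' a · ρo a = cid _. Proof. apply (ru_iso1 LO). Qed.
Lemma ro_i2 {a : C} : ρo a · ρo' a = cid _. Proof. apply (ru_iso2 LO). Qed.
Lemma lb_i1 {a : C} : λb' a · λb a = cid _. Proof. apply (lu_iso1 LB). Qed.
Lemma lb_i2 {a : C} : λb a · λb' a = cid _. Proof. apply (lu_iso2 LB). Qed.
Lemma rb_i1 {a : C} : ρb' a · ρb a = cid _. Proof. apply (ru_iso1 LB). Qed.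
Lemma rb_i2 {a : C} : ρb a · ρb' a = cid _. Proof. apply (ru_iso2 LB). Qed.
Lemma lo'_nat {a b : C} (f : hom a b) : λo' b · f = (cid I ⊙' f) · λo' a.
Proof. rewrite -[LHS]c1r -lo_i2 !cA -[λo' b · f · λo a]cA lo_nat !cA lo_i1 c1l. done. Qed.
Lemma ro'_nat {a b : C} (f : hom a b) : ρo' b · f = (f ⊙' cid I) · ρo' a.
Proof. rewrite -[LHS]c1r -ro_i2 !cA -[ρo' b · f · ρo a]cA ro_nat !cA ro_i1 c1l. done. Qed.
Lemma lb'_nat {a b : C} (f : hom a b) : λb' b · f = (cid J ⊛' f) · λb' a.
Proof. rewrite -[LHS]c1r -lb_i2 !cA -[λb' b · f · λb a]cA lb_nat !cA lb_i1 c1l. done. Qed.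
Lemma rb'_nat {a b : C} (f : hom a b) : ρb' b · f = (f ⊛' cid J) · ρb' a.
Proof. rewrite -[LHS]c1r -rb_i2 !cA -[ρb' b · f · ρb a]cA rb_nat !cA rb_i1 c1l. done. Qed.

Lemma K1b {a b : C} : (λb a ⊛' cid b) · αb' J a b = λb (a ⊛ b).
Proof. rewrite -(@kelly_l _ _ LB) -cA ab_i2 c1r. done. Qed.
Lemma K2o {x y : C} : αo' x y I · (cid x ⊙' ρo' y) = ρo' (x ⊙ y).
Proof.
  rewrite -[LHS]c1l -ro_i1 -(@kelly_r _ _ LO) !cA.
  rewrite -[ρo' _ · _ · αo _ _ _ · αo' _ _ _]cA ao_i2 c1r -cA -oC ro_i2 c1l o1 c1r. done.
Qed.
Lemma tri_o {a b : C} : (cid a ⊙' λo b) · αo a I b = ρo a ⊙' cid b. Proof. apply (triangle LO). Qed.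
Lemma tri_b {a b : C} : (cid a ⊛' λb b) · αb a J b = ρb a ⊛' cid b. Proof. apply (triangle LB). Qed.
Lemma zdr' {a b : C} : ζ a b I I · (cid (a ⊛ b) ⊙' δ) = (ρo' a ⊛' ρo' b) · ρo (a ⊛ b).
Proof.
  rewrite -Hzdr !cA -bC !ro_i1 b1 c1l. done.
Qed.
Lemma dlc : (τ ⊛' cid I) · δ = λb' I. Proof. apply Hdlc. Qed.

Lemma KL {Y : C} : ((λb A · (τ ⊛' cid A)) ⊛' cid Y) · αb' I A Y = λb (A ⊛ Y) · (τ ⊛' cid (A ⊛ Y)).
Proof.
  rewrite bCl -cA -ab'_nat b1 cA K1b. done.
Qed.
Lemma oCr' {a b c x y : C} (f : hom x y) (g : hom b c) (h : hom a b) : f ⊙' (g · h) = (cid y ⊙' g) · (f ⊙' h).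
Proof. by rewrite -oC c1l. Qed.
Lemma oCr'' {a b c x y : C} (f : hom x y) (g : hom b c) (h : hom a b) : f ⊙' (g · h) = (f ⊙' g) · (cid x ⊙' h).
Proof. by rewrite -oC c1r. Qed.
Lemma ctx2 {a b c d : C} {x : hom b c} {y : hom a b} {z : hom a c} {r : hom c d} :
  x · y = z -> r · x · y = r · z.
Proof. move=> H. by rewrite -cA H. Qed.
Lemma ctx3 {a b c e d : C} {x : hom c e} {y : hom b c} {w : hom a b} {z : hom a e} {r : hom e d} :
  x · y · w = z -> r · x · y · w = r · z.
Proof. move=> H. by rewrite -H !cA. Qed.
Lemma bXr {a b c d : C} (f : hom a b) (g : hom c d) : (1 ⊛' g) · (f ⊛' 1) = (f ⊛' 1) · (1 ⊛' g).
Proof. by rewrite bX. Qed.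
Lemma zab'' (M : C) :
  (ζ M A I A ⊛' cid (A ⊙ A)) · ζ (M ⊛ A) A (I ⊛ A) A · (αb' M A A ⊙' αb' I A A)
  = αb' (M ⊙ I) (A ⊙ A) (A ⊙ A) · (cid (M ⊙ I) ⊛' ζ A A A A) · ζ M (A ⊛ A) I (A ⊛ A).
Proof.
  have E := Hzab M A A I A A.
  rewrite -[LHS]c1l -ab_i1 -!cA. rewrite [αb _ _ _ · _]cA [αb _ _ _ · _ · _]cA E.
  rewrite -!cA -oC !ab_i2 o1 c1r. done.
Qed.
Lemma natpsi (M N : C) (f : hom M N) :
  ((f ⊙' cid A) ⊛' cid A) · gpsi M = gpsi N · ((f ⊛' cid A) ⊙' cid A).
Proof.
  rewrite /gpsi; nrm.
  have E1 := bX (f ⊙' cid A) μ. crw E1.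
  have E2 := zn f (cid A) (cid A) (cid A). rewrite !o1 !b1 in E2. symmetry in E2; crw E2.
  have E3 := oX (f ⊛' cid A) Δ. crw E3. done.
Qed.
Lemma psi_i (M : C) :
  ((cid M ⊙' μ) ⊛' cid A) · (αo M A A ⊛' cid A) · gpsi (M ⊙ A) · (gpsi M ⊙' cid A)
  = gpsi M · (cid (M ⊛ A) ⊙' μ) · αo (M ⊛ A) A A.
Proof.
  rewrite /gpsi; nrm.
  rewrite !oCl. nrm.
  have E1 := oX ((cid (M ⊙ A)) ⊛' μ) Δ. symmetry in E1. crw E1.
  have E2 := zn (cid (M ⊙ A)) μ (cid A) (cid A). rewrite !o1 !b1 in E2. crw E2.
  have E3 := oX (ζ M A A A) Δ. symmetry in E3. crw E3.
  have E4 := oX (cid (M ⊛ A) ⊙' Δ) Δ. symmetry in E4. crw E4.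
  have E0 : (cid (M ⊛ A) ⊙' Δ) · (cid (M ⊛ A) ⊙' μ) = cid (M ⊛ A) ⊙' (Δ · μ) by rewrite -oC c1l.
  crw E0. rewrite HWB !oCr. nrm.
  have E5 := zn (cid M) (cid A) μ μ. rewrite !b1 in E5. crw E5.
  have E6 := Hzao M A A A A A.
  have E6' : ζ M A (A ⊙ A) (A ⊙ A) · (cid (M ⊛ A) ⊙' ζ A A A A) =
     (αo M A A ⊛' αo A A A) · ζ (M ⊙ A) (A ⊙ A) A A · (ζ M A A A ⊙' cid (A ⊛ A)) · αo' _ _ _.
  { rewrite E6 -!cA ao_i2 c1r. done. }
  crw E6'.
  have E7 := ao'_nat (cid (M ⊛ A)) Δ Δ. crw E7. crw (@ao_i1 (M ⊛ A) A A). rewrite c1r.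
  rewrite [(cid (M ⊛ A) ⊙' Δ) ⊙' Δ]oS. nrm.
  have P : (cid (M ⊙ A) ⊛' μ) · ((cid M ⊙' μ) ⊛' (cid A ⊙' μ)) · (αo M A A ⊛' αo A A A)
     = ((cid M ⊙' μ) ⊛' cid A) · (αo M A A ⊛' cid A) · (cid _ ⊛' μ) · (cid _ ⊛' (μ ⊙' cid A)).
  { rewrite -!bC !c1l !c1r Hmua. done. }
  crw P. done.
Qed.
Lemma psi_iii (M : C) :
  (gpsi M ⊛' cid A) · gpsi (M ⊛ A) · (αb' M A A ⊙' cid A) · ((cid M ⊛' Δ) ⊙' cid A)
  = αb' (M ⊙ A) A A · (cid (M ⊙ A) ⊛' Δ) · gpsi M.
Proof.
  rewrite /gpsi; nrm.
  rewrite !bCl. nrm.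
  have E1 := bX (cid (M ⊛ A) ⊙' Δ) μ. crw E1.
  have E2 := bX (ζ M A A A) μ. crw E2.
  have E3 := zn (cid (M ⊛ A)) (cid A) Δ (cid A). rewrite !o1 !b1 in E3. symmetry in E3. crw E3.
  have E0 : (cid (M ⊙ A) ⊛' Δ) · (cid (M ⊙ A) ⊛' μ) = cid (M ⊙ A) ⊛' (Δ · μ) by rewrite -bC c1l.
  crw E0. rewrite HWB !bCr. nrm.
  have E4 := zn (cid M) Δ (cid A) Δ. rewrite !o1 in E4. symmetry in E4. crw E4.
  have E5 := Hzab M A A A A A.
  have E5' : (cid (M ⊙ A) ⊛' ζ A A A A) · ζ M (A ⊛ A) A (A ⊛ A) =
     αb _ _ _ · (ζ M A A A ⊛' cid (A ⊙ A)) · ζ (M ⊛ A) A (A ⊛ A) A · (αb' M A A ⊙' αb' A A A).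
  { rewrite E5 -!cA -oC !ab_i2 o1 c1r. done. }
  crw E5'.
  have E6 := ab'_nat (cid (M ⊙ A)) μ μ. crw E6.
  crw (@ab_i1 (M ⊙ A) (A ⊙ A) (A ⊙ A)). rewrite c1r.
  rewrite [(cid (M ⊙ A) ⊛' μ) ⊛' μ]bS. nrm.
  have Q : (αb' M A A ⊙' αb' A A A) · ((cid M ⊛' Δ) ⊙' (cid A ⊛' Δ)) · (cid (M ⊛ A) ⊙' Δ)
     = (cid _ ⊙' (Δ ⊛' cid A)) · (cid _ ⊙' Δ) · (αb' M A A ⊙' cid A) · ((cid M ⊛' Δ) ⊙' cid A).
  { rewrite -!oC !c1l !c1r HDc. nrm. done. }
  symmetry in Q. crw Q. done.
Qed.
Lemma C3 :
  ((λb A · (τ ⊛' cid A)) ⊛' cid A) · ((cid (I ⊛ A) ⊛' μ) · (λo (I ⊛ A) ⊛' cid (A ⊙ A)))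
    · ζ I A (I ⊛ A) A · (cid (I ⊛ A) ⊙' αb' I A A) · (cid (I ⊛ A) ⊙' (cid I ⊛' (Δ · η)))
    · (cid (I ⊛ A) ⊙' δ) · ρo' (I ⊛ A)
  = (λo A ⊛' μ) · ζ I A A A · (cid (I ⊛ A) ⊙' (Δ · η)) · ρo' (I ⊛ A).
Proof.
  nrm.
  have E1 := bX (λb A · (τ ⊛' cid A)) μ. crw E1.
  have E2 : ((λb A · (τ ⊛' cid A)) ⊛' cid (A ⊙ A)) · (λo (I ⊛ A) ⊛' cid (A ⊙ A))
    = (λo A ⊛' cid (A ⊙ A)) · ((cid I ⊙' (λb A · (τ ⊛' cid A))) ⊛' cid (A ⊙ A)).
  { rewrite -!bCl -lo_nat. done. }
  crw E2.
  have E3 := zn (cid I) (cid A) (λb A · (τ ⊛' cid A)) (cid A). rewrite !b1 !o1 in E3.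
  symmetry in E3. crw E3.
  have E4 : (cid (I ⊛ A) ⊙' ((λb A · (τ ⊛' cid A)) ⊛' cid A)) · (cid (I ⊛ A) ⊙' αb' I A A)
      · (cid (I ⊛ A) ⊙' (cid I ⊛' (Δ · η))) · (cid (I ⊛ A) ⊙' δ) = cid (I ⊛ A) ⊙' (Δ · η).
  { rewrite -!oCr. f_equal. rewrite KL.
    have F1 := bX τ (Δ · η). rewrite -!cA. rewrite [(τ ⊛' _) · (_ · _)]cA F1 -!cA dlc.
    rewrite cA -lb_nat -cA lb_i2 c1r. done. }
  crw E4. rewrite [λo A ⊛' μ]bS'. nrm. done.
Qed.
Lemma C2 :
  (Δ ⊛' cid A) · Δ · η
  = (((λo A ⊛' μ) · ζ I A A A · (cid (I ⊛ A) ⊙' (Δ · η)) · ρo' (I ⊛ A)) ⊛' cid A)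
    · αb' I A A · (cid I ⊛' (Δ · η)) · δ.
Proof.
  transitivity ((((λb A · (τ ⊛' cid A)) ⊛' cid A) ⊛' cid A) ·
    (αb' (I ⊛ A) A A · αb' I A (A ⊛ A) · (cid I ⊛' (cid A ⊛' Δ)) · (cid I ⊛' Δ) · (cid I ⊛' η) · δ)).
  { nrm.
    have E1 := ab'_nat (λb A · (τ ⊛' cid A)) (cid A) (cid A). rewrite b1 in E1. symmetry in E1. crw E1.
    crw (@KL (A ⊛ A)).
    have F1 := bX τ (cid A ⊛' Δ). crw F1.
    have F2 := bX τ Δ. crw F2.
    have F3 := bX τ η. crw F3.
    crw dlc.
    have G1 := lb_nat (cid A ⊛' Δ). symmetry in G1. crw G1.
    have G2 := lb_nat Δ. symmetry in G2. crw G2.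
    have G3 := lb_nat η. symmetry in G3. crw G3.
    rewrite -[_ · lu _ _ · lui _ _]cA lb_i2 c1r.
    rewrite HDc. nrm. done. }
  rewrite -HRRU. nrm.
  rewrite -!bCl. rewrite C3. done.
Qed.
Lemma ZX (M : C) :
  ζ M A A A · (cid (M ⊛ A) ⊙' ((λo A ⊛' μ) · ζ I A A A · (cid (I ⊛ A) ⊙' (Δ · η)) · ρo' (I ⊛ A)))
  = ((cid M ⊙' λo A) ⊛' (cid A ⊙' μ)) · (αo M I A ⊛' αo A A A) · ζ (M ⊙ I) (A ⊙ A) A A
    · (cid _ ⊙' (Δ · η)) · ρo' _ · ζ M A I A.
Proof.
  rewrite !oCr. nrm.
  have E1 := zn (cid M) (cid A) (λo A) μ. rewrite b1 in E1. crw E1.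
  have E2 := Hzao M A I A A A.
  have E2' : ζ M A (I ⊙ A) (A ⊙ A) · (cid (M ⊛ A) ⊙' ζ I A A A) =
     (αo M I A ⊛' αo A A A) · ζ (M ⊙ I) (A ⊙ A) A A · (ζ M A I A ⊙' cid (A ⊛ A)) · αo' _ _ _.
  { rewrite E2 -!cA ao_i2 c1r. done. }
  crw E2'.
  have E3 := ao'_nat (cid (M ⊛ A)) (cid (I ⊛ A)) Δ. rewrite o1 in E3. crw E3.
  have E3' := ao'_nat (cid (M ⊛ A)) (cid (I ⊛ A)) η. rewrite o1 in E3'. crw E3'.
  crw (@K2o (M ⊛ A) (I ⊛ A)).
  have E4 := oX (ζ M A I A) Δ. crw E4.
  have E4' := oX (ζ M A I A) η. crw E4'.
  have E5 := ro'_nat (ζ M A I A). symmetry in E5. crw E5. done.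
Qed.

Lemma YM (M : C) :
  (cid (M ⊙ A) ⊛' μ) · ((cid M ⊙' λo A) ⊛' (cid A ⊙' μ)) · (αo M I A ⊛' αo A A A)
    · ζ (M ⊙ I) (A ⊙ A) A A · (cid _ ⊙' (Δ · η)) · ρo' _
  = ((cid M ⊙' λo A) ⊛' μ) · (αo M I A ⊛' cid (A ⊙ A)) · ζ (M ⊙ I) A A A
    · (cid _ ⊙' (Δ · η)) · ρo' _ · (cid (M ⊙ I) ⊛' μ).
Proof.
  have P : (cid (M ⊙ A) ⊛' μ) · ((cid M ⊙' λo A) ⊛' (cid A ⊙' μ)) · (αo M I A ⊛' αo A A A)
     = ((cid M ⊙' λo A) ⊛' μ) · (αo M I A ⊛' cid (A ⊙ A)) · (cid _ ⊛' (μ ⊙' cid A)).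
  { rewrite -!bC !c1l !c1r Hmua. nrm. done. }
  crw P.
  have E1 := zn (cid (M ⊙ I)) μ (cid A) (cid A). rewrite !o1 !b1 in E1. symmetry in E1. crw E1.
  have E2 := oX (cid (M ⊙ I) ⊛' μ) (Δ · η). crw E2.
  have E3 := ro'_nat (cid (M ⊙ I) ⊛' μ). symmetry in E3. crw E3. done.
Qed.

Lemma YP (M : C) :
  ((cid M ⊙' λo A) ⊛' μ) · (αo M I A ⊛' cid (A ⊙ A)) · ζ (M ⊙ I) A A A
    · (cid _ ⊙' (Δ · η)) · ρo' _ · (ρo' M ⊛' cid A)
  = (cid (M ⊙ A) ⊛' μ) · ζ M A A A · (cid (M ⊛ A) ⊙' Δ) · (cid (M ⊛ A) ⊙' η) · ρo' (M ⊛ A).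
Proof.
  have E1 := ro'_nat (ρo' M ⊛' cid A). crw E1.
  have E2 := oX (ρo' M ⊛' cid A) (Δ · η). symmetry in E2. crw E2.
  have E3 := zn (ρo' M) (cid A) (cid A) (cid A). rewrite !o1 !b1 in E3. crw E3.
  have P : ((cid M ⊙' λo A) ⊛' μ) · (αo M I A ⊛' cid (A ⊙ A)) · ((ρo' M ⊙' cid A) ⊛' cid (A ⊙ A))
    = cid (M ⊙ A) ⊛' μ.
  { rewrite -!bC !c1r tri_o -oC ro_i2 c1l o1. done. }
  crw P. rewrite oCr. nrm. done.
Qed.
Lemma Qcore (M : C) :
  ((cid (M ⊙ A) ⊛' μ) ⊛' μ) · (ζ M A A A ⊛' cid (A ⊙ A)) · ζ (M ⊛ A) A (A ⊛ A) A
    · ((αb' M A A · (cid M ⊛' Δ)) ⊙' ((Δ ⊛' cid A) · Δ · η)) · ρo' (M ⊛ A)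
  = (((cid (M ⊙ A) ⊛' μ) · ζ M A A A · (cid (M ⊛ A) ⊙' Δ) · (cid (M ⊛ A) ⊙' η) · ρo' (M ⊛ A)) ⊛' cid A)
    · αb' M A A · (cid M ⊛' Δ).
Proof.
  rewrite C2.
  have Gy : (αb' M A A · (cid M ⊛' Δ)) ⊙'
     ((((λo A ⊛' μ) · ζ I A A A · (cid (I ⊛ A) ⊙' (Δ · η)) · ρo' (I ⊛ A)) ⊛' cid A) · αb' I A A · (cid I ⊛' (Δ · η)) · δ)
   = (cid _ ⊙' (((λo A ⊛' μ) · ζ I A A A · (cid (I ⊛ A) ⊙' (Δ · η)) · ρo' (I ⊛ A)) ⊛' cid A))
     · (αb' M A A ⊙' αb' I A A) · ((cid M ⊛' Δ) ⊙' (cid I ⊛' (Δ · η))) · (cid (M ⊛ A) ⊙' δ).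
  { rewrite -!oC !c1l !c1r. done. }
  rewrite Gy. nrm.
  have E2 := zn (cid (M ⊛ A)) (cid A) ((λo A ⊛' μ) · ζ I A A A · (cid (I ⊛ A) ⊙' (Δ · η)) · ρo' (I ⊛ A)) (cid A).
  rewrite !o1 !b1 in E2. crw E2.
  rewrite (ctx2 (eq_sym (bCl _ _))). nrm. rewrite ZX.
  rewrite [(cid (M ⊙ A) ⊛' μ) ⊛' μ]bS.
  rewrite (ctx2 (bXr _ μ)).
  nrm. rewrite -bCl. nrm. rewrite YM.
  rewrite [(_ · ζ M A I A) ⊛' _]bCl.
  rewrite [(_ · (cid (M ⊙ I) ⊛' μ)) ⊛' _]bCl.
  rewrite (ctx2 (bX (ζ M A I A) μ)). nrm.
  crw (zab'' M).
  have E3 := zn (cid M) Δ (cid I) (Δ · η). rewrite o1 in E3. crw E3.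
  crw (@zdr' M A). crw (@ro_i2 (M ⊛ A)). rewrite c1r.
  rewrite (ctx2 (eq_sym (bS (cid (M ⊙ I) ⊛' μ) μ))). nrm.
  have E4 := ab'_nat (cid (M ⊙ I)) μ μ. symmetry in E4. crw E4.
  have K : (cid (M ⊙ I) ⊛' (μ ⊛' μ)) · (cid (M ⊙ I) ⊛' ζ A A A A) · (cid (M ⊙ I) ⊛' (Δ ⊙' (Δ · η)))
     · (ρo' M ⊛' ρo' A) = ρo' M ⊛' Δ.
  { rewrite -!bCr -bC c1l. f_equal. rewrite oCr'' !cA -HWB. rewrite -[Δ · μ · _]cA Hmur -cA ro_i2 c1r. done. }
  crw K.
  rewrite [ρo' M ⊛' Δ]bS. nrm.
  have E5 := ab'_nat (ρo' M) (cid A) (cid A). rewrite b1 in E5. crw E5.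
  rewrite -bCl YP. done.
Qed.
Lemma L3 (M : C) :
  αb' (M ⊙ A) A A · (cid (M ⊙ A) ⊛' Δ) · gpsi M
  = ((cid (M ⊙ A) ⊛' μ) ⊛' μ) · (ζ M A A A ⊛' cid (A ⊙ A)) · ζ (M ⊛ A) A (A ⊛ A) A
    · ((αb' M A A · (cid M ⊛' Δ)) ⊙' ((Δ ⊛' cid A) · Δ)).
Proof.
  rewrite /gpsi; nrm.
  have E0 : (cid (M ⊙ A) ⊛' Δ) · (cid (M ⊙ A) ⊛' μ) = cid (M ⊙ A) ⊛' (Δ · μ) by rewrite -bC c1l.
  crw E0. rewrite HWB !bCr. nrm.
  have E4 := zn (cid M) Δ (cid A) Δ. rewrite !o1 in E4. symmetry in E4. crw E4.
  have E5 := Hzab M A A A A A.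
  have E5' : (cid (M ⊙ A) ⊛' ζ A A A A) · ζ M (A ⊛ A) A (A ⊛ A) =
     αb _ _ _ · (ζ M A A A ⊛' cid (A ⊙ A)) · ζ (M ⊛ A) A (A ⊛ A) A · (αb' M A A ⊙' αb' A A A).
  { rewrite E5 -!cA -oC !ab_i2 o1 c1r. done. }
  crw E5'.
  have E6 := ab'_nat (cid (M ⊙ A)) μ μ. crw E6.
  crw (@ab_i1 (M ⊙ A) (A ⊙ A) (A ⊙ A)). rewrite c1r.
  have Hs : (αb' M A A · (cid M ⊛' Δ)) ⊙' ((Δ ⊛' cid A) · Δ)
    = (αb' M A A ⊙' αb' A A A) · ((cid M ⊛' Δ) ⊙' (cid A ⊛' Δ)) · (cid (M ⊛ A) ⊙' Δ).
  { rewrite -!oC !c1r HDc. nrm. done. }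
  rewrite Hs. nrm. done.
Qed.

Lemma StepC (X : C) :
  (ρb X ⊛' cid A) · ((cid X ⊛' ε) ⊛' cid A) · αb' X A A · (cid X ⊛' Δ) = cid _.
Proof.
  have E1 := ab'_nat (cid X) ε (cid A). symmetry in E1. crw E1.
  have E2 : (ρb X ⊛' cid A) · αb' X J A = cid X ⊛' λb A.
  { rewrite -tri_b -cA ab_i2 c1r. done. }
  crw E2. rewrite -!bCr -cA HDlc lb_i2 b1. done.
Qed.

Lemma psi_ii (M : C) :
  gpsi M · (cid (M ⊛ A) ⊙' η) · ρo' (M ⊛ A)
  = (ρb (M ⊙ A) ⊛' cid A) · ((cid (M ⊙ A) ⊛' ε) ⊛' cid A) · (gpsi M ⊛' cid A)
    · ((cid (M ⊛ A) ⊙' η) ⊛' cid A) · (ρo' (M ⊛ A) ⊛' cid A)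
    · αb' M A A · (cid M ⊛' Δ).
Proof.
  have Qeq : αb' (M ⊙ A) A A · (cid (M ⊙ A) ⊛' Δ) · (gpsi M · (cid (M ⊛ A) ⊙' η) · ρo' (M ⊛ A))
     = ((gpsi M · (cid (M ⊛ A) ⊙' η) · ρo' (M ⊛ A)) ⊛' cid A) · αb' M A A · (cid M ⊛' Δ).
  { have L := L3 M. rewrite /gpsi in L. rewrite /gpsi. nrm. rewrite ?cA in L. rewrite L. rewrite (ctx2 (eq_sym (oCr'' _ _ η))). nrm. rewrite Qcore. rewrite /gpsi. nrm. done. }
  transitivity ((ρb (M ⊙ A) ⊛' cid A) · ((cid (M ⊙ A) ⊛' ε) ⊛' cid A) ·
     (((gpsi M · (cid (M ⊛ A) ⊙' η) · ρo' (M ⊛ A)) ⊛' cid A) · αb' M A A · (cid M ⊛' Δ))).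
  { rewrite -Qeq. nrm. rewrite StepC c1l. rewrite /gpsi. nrm. done. }
  rewrite !bCl. nrm. done.
Qed.
End S.


Definition Cop (C : Cat) : Cat :=
  {| ob := ob C;
     hom := fun a b => @hom C b a;
     cid := fun a => @cid C a;
     comp := fun a b c g f => @comp C c b a f g;
     comp_idl := fun a b f => @comp_idr C b a f;
     comp_idr := fun a b f => @comp_idl C b a f;
     comp_assoc := fun a b c d h g f => eq_sym (@comp_assoc C d c b a f g h) |}.

Section OpM.
Variables (C : Cat) (M : MonOps C) (L : MonLaws M).
Local Notation T := (tensm M).

Definition opM : MonOps (Cop C) :=
  {| tens := tens M : Cop C -> Cop C -> Cop C;
     tensm := fun a b c d (f : @hom C b a) (g : @hom C d c) => tensm M f g;
     munit := munit M;
     asc := fun a b c => asci M a b c;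
     asci := fun a b c => asc M a b c;
     lu := fun a => lui M a;
     lui := fun a => lu M a;
     ru := fun a => rui M a;
     rui := fun a => ru M a |}.

Lemma inv_unique {a b : C} (X Y : hom a b) (X' Y' : hom b a) :
  X = Y -> X' · X = cid a -> Y · Y' = cid b -> X' = Y'.
Proof. move=> E H1 H2. by rewrite -[X']comp_idr -H2 kcA -E H1 comp_idl. Qed.

Lemma asci_nat' {a a' b b' c c' : C} (f : hom a a') (g : hom b b') (h : hom c c') :
  asci M a' b' c' · T f (T g h) = T (T f g) h · asci M a b c.
Proof.
  rewrite -[LHS]comp_idr -(asc_iso2 L a b c) !kcA.
  rewrite -[asci _ _ _ _ · T f (T g h) · asc M a b c]kcA -(asc_nat L) kcA (asc_iso1 L) comp_idl. done.
Qed.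
Lemma lui_nat' {a b : C} (f : hom a b) : lui M b · f = T (cid (munit M)) f · lui M a.
Proof.
  rewrite -[LHS]comp_idr -(lu_iso2 L a) !kcA.
  rewrite -[lui _ _ · f · lu M a]kcA (lu_nat L) kcA (lu_iso1 L) comp_idl. done.
Qed.
Lemma rui_nat' {a b : C} (f : hom a b) : rui M b · f = T f (cid (munit M)) · rui M a.
Proof.
  rewrite -[LHS]comp_idr -(ru_iso2 L a) !kcA.
  rewrite -[rui _ _ · f · ru M a]kcA (ru_nat L) kcA (ru_iso1 L) comp_idl. done.
Qed.

Lemma pent_inv (a b c d : C) :
  asci M (tens M a b) c d · asci M a b (tens M c d)
  = T (asci M a b c) (cid d) · asci M a (tens M b c) d · T (cid a) (asci M b c d).
Proof.
  apply (inv_unique _ _ _ _ (pentagon L a b c d)).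
  - rewrite -!kcA [asci _ _ _ (tens _ _ _) · (_ · _)]kcA (asc_iso1 L) comp_idl (asc_iso1 L). done.
  - rewrite -!kcA [T (asc _ _ _ _) _ · (_ · _)]kcA -(tensm_comp L) (asc_iso2 L) comp_idl (tensm_id L) comp_idl.
    rewrite [asc _ _ _ _ · (_ · _)]kcA (asc_iso2 L) comp_idl -(tensm_comp L) (asc_iso2 L) comp_idl (tensm_id L). done.
Qed.

Lemma tri_inv (a b : C) : asci M a (munit M) b · T (cid a) (lui M b) = T (rui M a) (cid b).
Proof.
  apply (inv_unique _ _ _ _ (triangle L a b)).
  - rewrite -!kcA [T _ _ · (_ · _)]kcA -(tensm_comp L) (lu_iso1 L) comp_idl (tensm_id L) comp_idl (asc_iso1 L). done.
  - rewrite -(tensm_comp L) (ru_iso2 L) comp_idl (tensm_id L). done.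
Qed.

Lemma opL : MonLaws opM.
Proof.
  split.
  - move=> a b /=. apply (tensm_id L).
  - move=> a1 a2 a3 b1 b2 b3 f1 f2 g1 g2 /=. apply (tensm_comp L).
  - move=> a b c /=. apply (asc_iso1 L).
  - move=> a b c /=. apply (asc_iso2 L).
  - move=> a a' b b' c c' f g h /=. first [apply asci_nat' | symmetry; apply asci_nat'].
  - move=> a /=. apply (lu_iso1 L).
  - move=> a /=. apply (lu_iso2 L).
  - move=> a b f /=. first [apply lui_nat' | symmetry; apply lui_nat'].
  - move=> a /=. apply (ru_iso1 L).
  - move=> a /=. apply (ru_iso2 L).
  - move=> a b f /=. first [apply rui_nat' | symmetry; apply rui_nat'].
  - move=> a b c d /=. rewrite pent_inv. rewrite !kcA. done.
  - move=> a b /=. apply tri_inv.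
Qed.
End OpM.


Lemma iso_move {C : Cat} {a b c : C} (al : hom b a) (al' : hom a b) (X : hom c b) (Y : hom c a) :
  al' · al = cid b -> al · X = Y -> X = al' · Y.
Proof. move=> H1 H2. by rewrite -H2 kcA H1 comp_idl. Qed.
Lemma iso_move_r {C : Cat} {a c d : C} (be : hom c d) (be' : hom d c) (X : hom d a) (Y : hom c a) :
  be · be' = cid d -> X · be = Y -> X = Y · be'.
Proof. move=> H1 H2. by rewrite -H2 -kcA H1 comp_idr. Qed.

Theorem proposition5p1 (C : Cat) (D : Duoidal C) (A : C) (W : WeakBimonoid D A) :
  weak_mixed_distributive_law (wμ W) (wη W) (wΔ W) (wε W) (psi W).
Proof.
  have LO := mlaws (dO D). have LB := mlaws (dB D). have DL := dlaws D.
  split; [|split; [|split; [|split]]].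
  - move=> M N f. exact (natpsi _ _ _ LO LB _ (zeta_nat DL) _ _ _ _ _ f).
  - move=> M. exact (psi_i _ _ _ LO LB _ (zeta_nat DL) (zeta_assoc_o DL) _ _ _ (mu_assoc W) (ax_WB W) M).
  - move=> M. exact (psi_ii _ _ _ LO LB _ _ _ (zeta_nat DL) (delta_lcounit DL) (zeta_assoc_o DL) (zeta_assoc_b DL)
      (zeta_delta_r DL) _ _ _ _ _ (mu_assoc W) (mu_runit W) (Delta_coassoc W) (Delta_lcounit W) (ax_WB W) (ax_RRU W) M).
  - move=> M. exact (psi_iii _ _ _ LO LB _ (zeta_nat DL) (zeta_assoc_b DL) _ _ _ (Delta_coassoc W) (ax_WB W) M).
  - move=> M.
    unshelve epose proof (psi_ii (Cop C) (opM _ (dB D)) (opM _ (dO D)) (opL _ _ LB) (opL _ _ LO)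
      (dVarpi D) (dTau D) (fun a b c d => dZeta D a c b d) _ _ _ _ _ A (wΔ W) (wε W) (wμ W) (wη W)
      _ _ _ _ _ _ M) as H.
    all: simpl.
    + move=> *; symmetry; apply (zeta_nat DL).
    + apply (varpi_lunit DL).
    + move=> a b c d e f. rewrite !kcA. rewrite -[asci _ _ _ _ · _ · _]kcA.
      apply (iso_move (asc (dB D) _ _ _)). apply (asc_iso1 LB).
      rewrite !kcA (zeta_assoc_b DL) -kcA -(tensm_comp LO) !(asc_iso2 LB) (tensm_id LO) comp_idr. done.
    + move=> a b c d e f. rewrite !kcA.
      have Z := zeta_assoc_o DL a d b e c f.
      have E1 : dZeta D (tens (dO D) a b) (tens (dO D) d e) c f · tensm (dO D) (dZeta D a d b e) (cid (tens (dB D) c f))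
        = tensm (dB D) (asci (dO D) a b c) (asci (dO D) d e f)
          · (dZeta D a d (tens (dO D) b c) (tens (dO D) e f) · tensm (dO D) (cid (tens (dB D) a d)) (dZeta D b e c f)
             · asc (dO D) (tens (dB D) a d) (tens (dB D) b e) (tens (dB D) c f)).
      { rewrite -Z !kcA -(tensm_comp LB) !(asc_iso1 LO) (tensm_id LB) comp_idl. done. }
      rewrite E1 -!kcA (asc_iso2 LO) comp_idr !kcA. done.
    + move=> a b.
      have Z := zeta_varpi_r DL a b.
      have E1 : tensm (dB D) (cid (tens (dO D) a b)) (dVarpi D) · dZeta D a (munit (dB D)) b (munit (dB D))
        = rui (dB D) (tens (dO D) a b) · tensm (dO D) (ru (dB D) a) (ru (dB D) b).
      { rewrite -Z !kcA (ru_iso1 LB) comp_idl. done. }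
      rewrite kcA E1 -kcA -(tensm_comp LO) !(ru_iso2 LB) (tensm_id LO) comp_idr. done.
    + rewrite kcA. apply (Delta_coassoc W).
    + apply (Delta_rcounit W).
    + rewrite kcA. apply (mu_assoc W).
    + apply (mu_lunit W).
    + rewrite !kcA. apply (ax_WB W).
    + rewrite !kcA (Tl _ _ LO) ?kcA.
      have N := asc_nat LO (cid (munit (dB D))) (cid A) (wμ W). rewrite (tensm_id LO) in N.
      symmetry in N. crw N.
      have E := ax_LLC W. rewrite ?kcA in E. exact E.
    + rewrite /gpsi /= in H. rewrite ?kcA in H. rewrite /psi ?kcA. exact H.
Qed.
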